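(* Let $q\in X^*\setminus\{e\}$ and let $\lambda_q$ be the largest positive real root of $\mathfrak{p}_q(t):=t^{|q|}-\sum_{v\in\sqrt[*]{P_q}}t^{|q|-|v|}$. There is a constant $c>0$ depending only on $q$ such that every $\xi\in X^\omega$ that is quasiperiodic with quasiperiod $q$ satisfies $f(\xi,n)\le c\cdot\lambda_q^n$ for all $n\in\mathbb{N}$.
   Context: $X$ is a finite alphabet with $|X|\ge2$; $X^*$ the finite words (empty word $e$), $X^\omega$ the infinite words, $X^n$ the words of length $n$. $w\sqsubseteq\eta$ means $w$ is a prefix of $\eta$, $w\sqsubset\eta$ a proper prefix. An $\omega$-word $\xi$ is quasiperiodic with quasiperiod $q$ if for every $j\in\mathbb{N}$ there is a prefix $u_j\sqsubseteq\xi$ with $j-|q|<|u_j|\le j$ and $u_j\cdot q\sqsubseteq\xi$. $f(\xi,n):=|\mathrm{infix}(\xi)\cap X^n|$ is the number of distinct factors (subwords) of $\xi$ of length $n$. $P_q:=\{v: e\sqsubset v\sqsubseteq q\sqsubset v\cdot q\}$, and $\sqrt[*]{P_q}:=P_q\setminus(P_q^2\cdot P_q^* )$ (elements of $P_q$ not a concatenation of two or more elements of $P_q$). *)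

(* Defs.v *)
From Stdlib Require Import Reals ClassicalEpsilon.
From mathcomp Require Import all_boot.
Set Implicit Arguments. Unset Strict Implicit. Unset Printing Implicit Defensive.

Definition decP (P : Prop) : bool :=
  if excluded_middle_informative P then true else false.

Section Words.
Variable X : finType.

(* xi is quasiperiodic with quasiperiod q: for every j there is a prefix u_j of
   xi (determined by its length m) with j - |q| < m <= j and u_j q a prefix of xi *)
Definition quasiperiodic (q : seq X) (xi : nat -> X) : Prop :=
  forall j : nat, exists m : nat,
    (j < m + size q)%N /\ (m <= j)%N /\
    (forall i, (i < size q)%N -> xi (m + i)%N = nth (xi 0%N) q i).

Definition is_factor (xi : nat -> X) (w : seq X) : Prop :=
  exists i : nat, forall k, (k < size w)%N -> xi (i + k)%N = nth (xi 0%N) w k.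

Definition fcompl (xi : nat -> X) (n : nat) : nat :=
  #|[set w : n.-tuple X | decP (is_factor xi w)]|.

(* P_q = { v : e < v <= q < v q } ; all elements are nonempty prefixes of q *)
Definition Pq (q : seq X) : seq (seq X) :=
  [seq take k q | k <- iota 1 (size q) & prefix q (take k q ++ q) && (q != take k q ++ q)].

Definition Pq_decomposable (q : seq X) (v : seq X) : Prop :=
  exists s : seq (seq X), (2 <= size s)%N /\ all (fun u => u \in Pq q) s /\ flatten s = v.

Definition Pq_root (q : seq X) : seq (seq X) :=
  [seq v <- Pq q | decP (~ Pq_decomposable q v)].

Definition pq_eval (q : seq X) (t : R) : R :=
  Rminus (pow t (size q)) (foldr Rplus R0 [seq pow t (size q - size v) | v <- Pq_root q]).

End Words.

(* Main.v *)
Require Import Defs.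
From Stdlib Require Import Reals Lra Lia ClassicalEpsilon.
From mathcomp Require Import all_boot.
Set Implicit Arguments. Unset Strict Implicit. Unset Printing Implicit Defensive.

Ltac slia :=
  repeat match goal with H : (leq _ _) = false |- _ => move/negbT: H; rewrite -ltnNge => H end;
  repeat match goal with
  | H : is_true (leq _ _) |- _ => move: H
  | H : @eq nat _ _ |- _ => move: H
  | H : le _ _ |- _ => move: H
  | H : lt _ _ |- _ => move: H
  end;
  repeat match goal with |- context [size ?x] => move: (size x) => ? end;
  intros;
  repeat match goal with H : is_true (leq _ _) |- _ => move/leP: H => H end;
  try apply/leP; unfold addn, subn, muln in *; lia.

Lemma decP_true (P : Prop) : Defs.decP P -> P.
Proof. rewrite /Defs.decP; by case: (excluded_middle_informative P). Qed.
Lemma decP_intro (P : Prop) : P -> Defs.decP P.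
Proof. rewrite /Defs.decP; by case: (excluded_middle_informative P). Qed.

Definition sumR (T : Type) (g : T -> R) (s : seq T) : R :=
  foldr (fun v acc => Rplus (g v) acc) R0 s.

Lemma sumR_map (T : Type) (g : T -> R) s :
  foldr Rplus R0 (map g s) = sumR g s.
Proof. by elim: s => //= a s ->. Qed.

Lemma sumR_le (T : Type) (g h : T -> R) s :
  (forall x, List.In x s -> Rle (g x) (h x)) -> Rle (sumR g s) (sumR h s).
Proof.
elim: s => [|a s IH] H /=; first lra.
apply Rplus_le_compat; [apply H; left; done| apply IH => x Hx; apply H; right; done].
Qed.

Lemma size_flatten_map (U T : Type) (g : U -> seq T) s :
  INR (size (flatten (map g s))) = sumR (fun x => INR (size (g x))) s.
Proof. elim: s => //= a s IH. by rewrite size_cat plus_INR IH. Qed.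

Lemma size_flatten_bound (U T : Type) (g : U -> seq T) s B :
  (forall x, List.In x s -> Rle (INR (size (g x))) B) ->
  Rle (INR (size (flatten (map g s)))) (Rmult (INR (size s)) B).
Proof.
elim: s => [|a s IH] H; first (simpl; lra).
have -> : size (a :: s) = S (size s) by [].
rewrite S_INR [flatten _]/= size_cat plus_INR.
have h1 := H a (or_introl erefl).
have h2 := IH (fun x Hx => H x (or_intror Hx)). lra.
Qed.

Fixpoint W (X : finType) (Rt : seq (seq X)) (f L : nat) : seq (seq X) :=
  match f with
  | 0 => if L == 0 then [:: [::]] else [::]
  | f'.+1 => if L == 0 then [:: [::]] else
      flatten [seq [seq v ++ w | w <- W Rt f' (L - size v)] | v <- [seq v <- Rt | (0 < size v <= L)]]
  end.

Lemma key_ineq (X : finType) (Rt : seq (seq X)) K L lam :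
  Rlt R0 lam -> (forall v, v \in Rt -> size v <= K) ->
  Rle (Rmult (sumR (fun v => pow lam (L - size v)) [seq v <- Rt | (0 < size v <= L)]) (pow lam K))
      (Rmult (pow lam L) (sumR (fun v => pow lam (K - size v)) Rt)).
Proof.
move=> hl; elim: Rt => [|a Rt IH] H /=; first lra.
have IH' := IH (fun v hv => H v (mem_behead (s:=a::Rt) hv)).
have hK := H a (mem_head _ _).
have p1 : Rle R0 (Rmult (pow lam L) (pow lam (K - size a))).
  apply Rmult_le_pos; apply pow_le; lra.
case: ifP => hc /=.
- have e : Rmult (pow lam (L - size a)) (pow lam K) = Rmult (pow lam L) (pow lam (K - size a)).
    rewrite -!pow_add; f_equal. move/andP: hc => [h1 h2]. slia.
  rewrite Rmult_plus_distr_r Rmult_plus_distr_l e; lra.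
- lra.
Qed.

Lemma W_size (X : finType) (Rt : seq (seq X)) K lam :
  Rlt R0 lam -> (forall v, v \in Rt -> size v <= K) ->
  pow lam K = sumR (fun v => pow lam (K - size v)) Rt ->
  forall f L, Rle (INR (size (W Rt f L))) (pow lam L).
Proof.
move=> hl hK hroot; elim=> [|f IH] L /=.
  case: eqP => [->|_] /=; first lra. apply pow_le; lra.
case: eqP => [->|hL] /=; first lra.
rewrite size_flatten_map.
apply Rle_trans with (sumR (fun v => pow lam (L - size v)) [seq v <- Rt | (0 < size v <= L)]).
  apply sumR_le => x _. rewrite size_map. apply IH.
have := key_ineq L hl hK. rewrite -hroot => h.
have hp : Rlt R0 (pow lam K) by apply pow_lt.
apply (Rmult_le_reg_r (pow lam K)) => //.
Qed.

Lemma W_mem (X : finType) (Rt : seq (seq X)) :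
  (forall v, v \in Rt -> 0 < size v) ->
  forall s, all (fun v => v \in Rt) s ->
  forall f, size (flatten s) <= f -> flatten s \in W Rt f (size (flatten s)).
Proof.
move=> hpos; elim=> [|v s IH] /=.
  by move=> _ [|f] _ /=.
move/andP=> [hv hs] [|f] hf.
  have := hpos v hv. rewrite size_cat in hf. slia.
rewrite /=. have hv0 := hpos v hv.
have -> : (size (v ++ flatten s) == 0) = false.
  apply/eqP; rewrite size_cat; slia.
apply/flatten_mapP. exists v.
  rewrite mem_filter hv size_cat hv0 /= leq_addr //.
apply/mapP. exists (flatten s) => //.
have -> : size (v ++ flatten s) - size v = size (flatten s).
  rewrite size_cat; slia.
apply IH => //. rewrite size_cat in hf; slia.
Qed.

Lemma Pq_memE (X : finType) (q v : seq X) :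
  v \in Pq q -> exists k, [/\ 0 < k, k <= size q & v = take k q].
Proof.
rewrite /Pq => /mapP [k]; rewrite mem_filter mem_iota => /andP [_ /andP [h1 h2]] ->.
exists k; split => //; slia.
Qed.

Lemma Pq_size (X : finType) (q v : seq X) :
  v \in Pq q -> 0 < size v /\ size v <= size q.
Proof.
move=> /Pq_memE [k [h1 h2 ->]]. rewrite size_takel //.
Qed.

Lemma root_Pq (X : finType) (q v : seq X) : v \in Pq_root q -> v \in Pq q.
Proof. by rewrite /Pq_root mem_filter => /andP []. Qed.

Lemma size_le_flatten (T : Type) (u : seq T) (s : seq (seq T)) :
  List.In u s -> size u <= size (flatten s).
Proof.
elim: s => //= a s IH [->|h]; rewrite size_cat; first by rewrite leq_addr.
apply: leq_trans (IH h) _; by rewrite leq_addl.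
Qed.

Lemma size_lt_flatten (T : Type) (u : seq T) (s : seq (seq T)) :
  (forall x, List.In x s -> 0 < size x) -> 2 <= size s ->
  List.In u s -> size u < size (flatten s).
Proof.
case: s => [|a [|b t]] //= hpos _ [->|h]; rewrite size_cat.
- have := hpos b (or_intror (or_introl erefl)). rewrite size_cat. slia.
- have := size_le_flatten (h : List.In u (b :: t)). have := hpos a (or_introl erefl). simpl. rewrite size_cat. slia.
Qed.

Lemma all_In (T : eqType) (P : pred T) s x : all P s -> List.In x s -> P x.
Proof. move=> /allP h hx; apply h. elim: s hx {h} => //= a s IH [->|h]; rewrite inE ?eqxx // IH ?orbT //. Qed.

Lemma flatten_decomp (X : finType) (q : seq X) (s : seq (seq X)) :
  (forall u, List.In u s -> exists su, all (fun w => w \in Pq_root q) su /\ flatten su = u) ->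
  exists S, all (fun w => w \in Pq_root q) S /\ flatten S = flatten s.
Proof.
elim: s => [|a s IH] H; first by exists [::].
have [sa [ha ea]] := H a (or_introl erefl).
have [S [hS eS]] := IH (fun u hu => H u (or_intror hu)).
exists (sa ++ S). by rewrite all_cat ha hS flatten_cat ea eS.
Qed.

Lemma Pq_decomp (X : finType) (q : seq X) :
  forall N v, size v < N -> v \in Pq q ->
  exists s, all (fun w => w \in Pq_root q) s /\ flatten s = v.
Proof.
elim=> [|N IH] v // hN hv.
case: (excluded_middle_informative (Pq_decomposable q v)) => hd.
- have [s [h2 [hall hfl]]] := hd.
  rewrite -hfl; apply: flatten_decomp => u hu.
  apply IH; last exact: (all_In hall hu).
  have hpos : forall x, List.In x s -> 0 < size x.
    move=> x hx. exact: (Pq_size (all_In hall hx)).1.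
  have := size_lt_flatten hpos h2 hu. rewrite hfl. slia.
- exists [:: v]; split; last by rewrite /= cats0.
  rewrite /= andbT /Pq_root mem_filter hv andbT. exact: decP_intro.
Qed.

Definition occ (X : finType) (xi : nat -> X) (q : seq X) m :=
  forall i, i < size q -> xi (m + i) = nth (xi 0) q i.

Definition good (X : finType) (xi : nat -> X) (q : seq X) m m' :=
  exists s, [/\ all (fun w => w \in Pq_root q) s, size (flatten s) = m' - m &
    forall i, i < m' - m -> xi (m + i) = nth (xi 0) (flatten s) i].

Lemma step_Pq (X : finType) (xi : nat -> X) (q : seq X) m g :
  occ xi q m -> occ xi q (m + g) -> 0 < g -> g <= size q -> take g q \in Pq q.
Proof.
move=> o1 o2 g0 gq. apply/mapP; exists g; last by [].
rewrite mem_filter mem_iota; apply/andP; split; last by apply/andP; split; slia.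
apply/andP; split.
- rewrite prefixE; apply/eqP.
  apply: (@eq_from_nth _ (xi 0)).
    have hlt : size q < g + size q by slia.
    by rewrite size_take size_cat size_takel // hlt.
  have hlt : size q < g + size q by slia.
  move=> i; rewrite size_take size_cat size_takel // hlt => hi'.
  rewrite nth_take // nth_cat size_takel //. case: ifP => hig.
    by rewrite nth_take.
  rewrite -o2; last by slia.
  rewrite -o1 //. f_equal. slia.
- apply/eqP => h; have := congr1 size h; rewrite size_cat size_takel //; slia.
Qed.

Lemma good_step (X : finType) (xi : nat -> X) (q : seq X) m g :
  occ xi q m -> occ xi q (m + g) -> 0 < g -> g <= size q -> good xi q m (m + g).
Proof.
move=> o1 o2 g0 gq.
have hP := step_Pq o1 o2 g0 gq.
have [s [hs hfl]] := @Pq_decomp X q (size (take g q)).+1 _ (leqnn _) hP.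
exists s; split => //.
  rewrite hfl size_takel //; slia.
move=> i hi; rewrite hfl nth_take; last by slia.
apply o1; slia.
Qed.

Lemma good_trans (X : finType) (xi : nat -> X) (q : seq X) m m1 m2 :
  m <= m1 -> m1 <= m2 -> good xi q m m1 -> good xi q m1 m2 -> good xi q m m2.
Proof.
move=> h1 h2 [s1 [a1 e1 f1]] [s2 [a2 e2 f2]].
exists (s1 ++ s2); split.
- by rewrite all_cat a1 a2.
- rewrite flatten_cat size_cat e1 e2; slia.
- move=> i hi; rewrite flatten_cat nth_cat e1. case: ifP => hc.
    by apply f1.
  rewrite -f2; last by slia.
  f_equal; slia.
Qed.

Lemma chain (X : finType) (xi : nat -> X) (q : seq X) :
  quasiperiodic q xi ->
  forall N m T, T - m < N -> occ xi q m -> m <= T ->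
  exists m', [/\ T <= m', m' < T + size q & good xi q m m'].
Proof.
move=> hqp; elim=> [|N IH] m T // hN ho hmT.
have [hq0 | hq0] := posnP (size q).
  have [m1 [a1 [a2 a3]]] := hqp T. have : False by rewrite hq0 in a1; slia. done.
case: (eqVneq m T) => [<-|hne].
  exists m; split => //; first by slia.
  exists [::]; split => //; first by rewrite /= subnn.
  move=> i; rewrite subnn //.
have hmT2 : m < T by rewrite ltn_neqAle hne hmT.
have [m1 [a1 [a2 a3]]] := hqp (m + size q).
have ho1 : occ xi q m1 by move=> i hi; rewrite a3.
have hg := @good_step X xi q m (m1 - m) ho.
have em : m + (m1 - m) = m1 by slia.
rewrite em in hg.
have g1 := hg ho1 ltac:(slia) ltac:(slia).
case: (leqP m1 T) => hc.
- have [m' [b1 b2 b3]] := IH m1 T ltac:(slia) ho1 hc.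
  exists m'; split => //. apply: good_trans g1 b3; slia.
- exists m1; split => //; slia.
Qed.

Lemma In_mem (T : eqType) (x : T) s : List.In x s -> x \in s.
Proof. elim: s => //= a s IH [->|h]; rewrite inE ?eqxx // IH ?orbT //. Qed.

Theorem lemma6 (X : finType) (hX : (1 < #|X|)%N) (q : seq X) (hq : q != [::])
  (lam : R) (hlam_pos : Rlt R0 lam) (hlam_root : pq_eval q lam = R0)
  (hlam_max : forall t : R, Rlt R0 t -> pq_eval q t = R0 -> Rle t lam) :
  exists c : R, Rlt R0 c /\
    forall xi : nat -> X, quasiperiodic q xi ->
      forall n : nat, Rle (INR (fcompl xi n)) (Rmult c (pow lam n)).
Proof.
set K := size q.
have hK0 : 0 < K by rewrite lt0n size_eq0.
set Rt := Pq_root q.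
have hK : forall v, v \in Rt -> size v <= K.
  by move=> v hv; have := Pq_size (root_Pq hv) => -[].
have hpos : forall v, v \in Rt -> 0 < size v.
  by move=> v hv; have := Pq_size (root_Pq hv) => -[].
have hroot : pow lam K = sumR (fun v => pow lam (K - size v)) Rt.
  move: hlam_root; rewrite /pq_eval sumR_map => h. rewrite /Rt /K. lra.
have Wb := W_size hlam_pos hK hroot.
set M := pow (Rplus 1 lam) (2 * K).
have hM : Rlt R0 M by apply pow_lt; lra.
exists (Rmult (INR K) (Rmult (INR (2 * K)) M)); split.
  apply Rmult_lt_0_compat; first by apply lt_0_INR; apply/ltP.
  apply Rmult_lt_0_compat => //. apply lt_0_INR; apply/ltP; slia.
move=> xi hqp n.
pose mk (u : seq X) : n.-tuple X := [tuple nth (xi 0) u i | i < n].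
pose Z := flatten (map (fun d => flatten (map (fun L => map (fun u => mk (drop d u)) (W Rt L L))
              (iota n (2 * K)))) (iota 0 K)).
have hZ : Rle (INR (size Z)) (Rmult (INR K) (Rmult (INR (2 * K)) (Rmult (pow lam n) M))).
  rewrite /Z. apply Rle_trans with (Rmult (INR (size (iota 0 K))) (Rmult (INR (2 * K)) (Rmult (pow lam n) M))); last by rewrite size_iota; right.
  apply size_flatten_bound => d _.
  apply Rle_trans with (Rmult (INR (size (iota n (2 * K)))) (Rmult (pow lam n) M)); last by rewrite size_iota; right.
  apply size_flatten_bound => L hL.
  rewrite size_map. apply Rle_trans with (pow lam L); first by apply Wb.
  have := In_mem hL; rewrite mem_iota => /andP [h1 h2].
  have -> : L = (n + (L - n))%coq_nat by slia.
  rewrite pow_add. apply Rmult_le_compat_l; first by apply pow_le; lra.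
  apply Rle_trans with (pow (Rplus 1 lam) (L - n)).
    apply pow_incr; lra.
  apply Rle_pow; first lra. apply/leP; slia.
apply Rle_trans with (INR (size Z)); last first.
  apply (Rle_trans _ _ _ hZ). apply Req_le. ring.
apply le_INR; apply/leP.
rewrite /fcompl. apply: leq_trans (card_size Z).
apply: subset_leq_card. apply/subsetP => w; rewrite inE => /decP_true [p hp].
have [m0 [a1 [a2 a3]]] := hqp p.
have ho : occ xi q m0 by move=> i hi; rewrite a3.
have [m' [b1 b2 [s [c1 c2 c3]]]] := chain hqp (N := (p + n - m0).+1) (T := p + n) (leqnn _) ho ltac:(slia).
have hu := W_mem hpos c1 (leqnn _).
rewrite c2 in hu.
apply/flatten_mapP; exists (p - m0).
  rewrite mem_iota; apply/andP; split => //. rewrite /K; slia.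
apply/flatten_mapP; exists (m' - m0).
  rewrite mem_iota; apply/andP; split; rewrite /K; slia.
apply/mapP; exists (flatten s) => //.
apply: eq_from_tnth => i. have hi := ltn_ord i.
rewrite tnth_mktuple nth_drop (tnth_nth (xi 0)).
rewrite -hp; last by rewrite size_tuple.
rewrite -c3; last by slia.
f_equal; slia.
Qed.
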